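(* Let $(W_i',X_i',Y_i)'$, $i=1,2,\ldots$, be i.i.d. draws from a population $F_{W,X,Y}$, where $W$ is a $J\times 1$ vector of controls with support $\mathbb{W}$, $X$ is a $K\times1$ vector of policy variables, and $Y$ is a scalar outcome, with $\mathbb{E}[Y^2\mid W=w]<\infty$ and $\mathbb{E}[\|X\|^2\mid W=w]<\infty$ for all $w\in\mathbb{W}$. Let $e_0(w)=\mathbb{E}[X\mid W=w]$ and $v_0(w)=\mathbb{V}(X\mid W=w)$, and assume (overlap) that there is $\kappa>0$ with $t'v_0(w)t\geq\kappa$ for all $w\in\mathbb{W}$ and all column vectors $t$ with $\|t\|=1$. Define $b_0(w)=v_0(w)^{-1}\mathbb{C}(X,Y\mid W=w)$ and $\beta_0=\mathbb{E}[b_0(W)]$. Suppose each unit has a potential response function $Y(x)=A+x'B$, where $A$ is a scalar and $B$ a $K\times1$ vector of unit-specific random coefficients, and the observed outcome is $Y=Y(X)$. Suppose further (conditional exogeneity) that for all $w\in\mathbb{W}$ and all $k,l=1,\ldots,K$, $$\mathbb{C}(A,X_k\mid W=w)=\mathbb{C}(B,X_k\mid W=w)=\mathbb{C}(B,X_kX_l\mid W=w)=0.$$ Then $\beta_0=\mathbb{E}[B]$.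
   Context: $\mathbb{C}(\cdot,\cdot\mid W=w)$ denotes conditional covariance and $\mathbb{V}(\cdot\mid W=w)$ conditional variance given $W=w$. *)

(* Defs.v *)
From HB Require Import structures.
From mathcomp Require Import all_boot all_order all_algebra.
From mathcomp Require Import all_classical all_reals all_analysis.
Set Implicit Arguments. Unset Strict Implicit. Unset Printing Implicit Defensive.
Import Order.TTheory GRing.Theory Num.Theory.
Local Open Scope ring_scope.

(* The population is described by the law muW of the controls W (on a
   measurable space TW) together with a regular conditional distribution
   (probability kernel) kap : w |-> law of the unit's characteristics
   omega = (A, B, X) given W = w, living on a measurable space T. *)

Section Defs.
Context {R : realType} {dW dT : measure_display}
  {TW : measurableType dW} {T : measurableType dT}.

Definition condE (kap : R.-pker TW ~> T) (w : TW) (f : T -> R) : R :=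
  \int[kap w]_t f t.

Definition condCov (kap : R.-pker TW ~> T) (w : TW) (f g : T -> R) : R :=
  condE kap w (fun t => f t * g t) - condE kap w f * condE kap w g.

Definition e0 (kap : R.-pker TW ~> T) {K : nat} (X : 'I_K -> T -> R) (w : TW)
  : 'cV[R]_K := \col_k condE kap w (X k).

Definition v0 (kap : R.-pker TW ~> T) {K : nat} (X : 'I_K -> T -> R) (w : TW)
  : 'M[R]_K := \matrix_(k, l) condCov kap w (X k) (X l).

Definition Yobs {K : nat} (A : T -> R) (B X : 'I_K -> T -> R) (t : T) : R :=
  A t + \sum_(k < K) X k t * B k t.

Definition b0 (kap : R.-pker TW ~> T) {K : nat} (A : T -> R)
  (B X : 'I_K -> T -> R) (w : TW) : 'cV[R]_K :=
  invmx (v0 kap X w) *m \col_k condCov kap w (X k) (Yobs A B X).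

Definition beta0 (muW : probability TW R) (kap : R.-pker TW ~> T) {K : nat}
  (A : T -> R) (B X : 'I_K -> T -> R) : 'cV[R]_K :=
  \col_k \int[muW]_w (b0 kap A B X w k 0).

(* expectation under the joint law of (W, omega): E[f] = E[ E[f | W] ] *)
Definition jointE (muW : probability TW R) (kap : R.-pker TW ~> T)
  (f : T -> R) : R := \int[muW]_w condE kap w f.

Definition EB (muW : probability TW R) (kap : R.-pker TW ~> T) {K : nat}
  (B : 'I_K -> T -> R) : 'cV[R]_K := \col_k jointE muW kap (B k).

Definition joint_integrable (muW : probability TW R) (kap : R.-pker TW ~> T)
  (f : T -> R) : Prop :=
  measurable_fun setT f /\
  (\int[muW]_w \int[kap w]_t (`|f t|%:E) < +oo)%E.

End Defs.

(* Main.v *)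
Set Warnings "-all".
Require Import Defs.
From HB Require Import structures.
From mathcomp Require Import all_boot all_order all_algebra.
From mathcomp Require Import all_classical all_reals all_analysis.
From mathcomp Require Import measurable_realfun.
From mathcomp Require Import ring.
Import Order.TTheory GRing.Theory Num.Theory.
Local Open Scope ring_scope. Local Open Scope classical_set_scope.


Section H.
Context {R : realType} {d : measure_display} {T : measurableType d}.
Variable mu : {measure set T -> \bar R}.
Local Open Scope ereal_scope. Import HBNNSimple.

Lemma ge0_int_le (S : set T) (F G : T -> \bar R) : measurable S ->
  mu (~` S) = 0 -> (forall x, 0 <= F x) -> (forall x, 0 <= G x) ->
  (forall x, S x -> F x <= G x) ->
  \int[mu]_x F x <= \int[mu]_x G x.
Proof.
move=> mS mS0 F0 G0 FG; rewrite !ge0_integralTE//.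
apply: ge_ereal_sup => _ [h /= hF <-].
have -> : sintegral mu h = sintegral mu (proj_nnsfun h mS).
  rewrite -mrestrict -integral_nnsfun//.
  transitivity (\int[mu]_(x in setT) (h x)%:E).
    by rewrite integral_nnsfun// patch_setT.
  rewrite (ge0_negligible_integral (N := ~` S))//; last 2 first.
  - by apply/measurable_EFinP; exact: measurable_funPT.
  - by move=> x _; rewrite lee_fin.
  - by rewrite setTD setCK.
  by apply: measurableC.
apply: ereal_sup_ubound => /=; exists (proj_nnsfun h mS) => //= x.
rewrite mindicE /=; case: (boolP (x \in S)) => xS.
  by rewrite mulr1; apply: le_trans (hF x) (FG _ _); rewrite inE in xS.
by rewrite mulr0.
Qed.

Lemma int_ae (S : set T) (f g : T -> \bar R) : measurable S ->
  mu (~` S) = 0 -> (forall x, S x -> f x = g x) ->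
  \int[mu]_x f x = \int[mu]_x g x.
Proof.
move=> mS mS0 fg; rewrite integralE [RHS]integralE; congr (_ - _);
  apply/le_anti/andP; split; apply: (ge0_int_le _ _ _ mS mS0) => // x Sx;
  by rewrite ?funeposE ?funenegE fg.
Qed.
End H.

Section H2.
Context {R : realType} {d : measure_display} {T : measurableType d}.
Variable mu : {measure set T -> \bar R}.

Lemma Rint_sum (I : Type) (s : seq I) (f : I -> T -> R) :
  (forall i, mu.-integrable setT (EFin \o f i)) ->
  \int[mu]_x (\sum_(i <- s) f i x) = \sum_(i <- s) \int[mu]_x f i x.
Proof.
move=> fi; elim: s => [|i s ih].
  under eq_Rintegral do rewrite big_nil.
  by rewrite big_nil Rintegral_cst// mul0r.
under eq_Rintegral do rewrite big_cons.
rewrite RintegralD// ?ih ?big_cons//.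
have -> : (EFin \o (fun x => \sum_(j <- s) f j x)) = (fun x => \sum_(j <- s) (f j x)%:E)%E.
  by apply/funext => x /=; rewrite sumEFin.
exact: (integrable_sum measurableT s (fun j _ => fi j)).
Qed.
End H2.

Theorem proposition1 (R : realType) (dW dT : measure_display)
  (TW : measurableType dW) (T : measurableType dT)
  (muW : probability TW R) (kap : R.-pker TW ~> T)
  (Wsupp : set TW) (K : nat)
  (A : T -> R) (B X : 'I_K -> T -> R) (c : R) :
  (* W lies in Wsupp almost surely *)
  measurable Wsupp -> muW Wsupp = 1%E ->
  (* the unit characteristics are random variables *)
  measurable_fun setT A ->
  (forall k, measurable_fun setT (B k)) ->
  (forall k, measurable_fun setT (X k)) ->
  (* E[Y^2 | W = w] < oo and E[||X||^2 | W = w] < oo *)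
  (forall w, Wsupp w ->
     (kap w).-integrable setT (fun t => ((Yobs A B X t) ^+ 2)%:E)) ->
  (forall w, Wsupp w -> forall k,
     (kap w).-integrable setT (fun t => ((X k t) ^+ 2)%:E)) ->
  (* overlap *)
  0 < c ->
  (forall w, Wsupp w -> forall t : 'cV[R]_K, \sum_(k < K) t k 0 ^+ 2 = 1 ->
     c <= (t^T *m v0 kap X w *m t) 0 0) ->
  (* the conditional covariances below are well defined (finite) *)
  (forall w, Wsupp w ->
     (kap w).-integrable setT (fun t => (A t)%:E) /\
     (forall k, (kap w).-integrable setT (fun t => (A t * X k t)%:E)) /\
     (forall l, (kap w).-integrable setT (fun t => (B l t)%:E)) /\
     (forall l k, (kap w).-integrable setT (fun t => (B l t * X k t)%:E)) /\
     (forall l k m,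
        (kap w).-integrable setT (fun t => (B l t * (X k t * X m t))%:E))) ->
  (* conditional exogeneity *)
  (forall w, Wsupp w -> forall k l m,
     condCov kap w A (X k) = 0 /\
     condCov kap w (B l) (X k) = 0 /\
     condCov kap w (B l) (fun t => X k t * X m t) = 0) ->
  (* E[B] exists *)
  (forall l, joint_integrable muW kap (B l)) ->
  beta0 muW kap A B X = EB muW kap B.
Proof.
move=> mS S1 mA mB mX iY iX c0 ov iAB ex jB.
have SC0 : muW (~` Wsupp) = 0%E by rewrite probability_setC // S1 subee.
have key : forall w, Wsupp w -> b0 kap A B X w = \col_l condE kap w (B l).
  move=> w Sw.
  have [iA [iAX [iB [iBX iBXX]]]] := iAB w Sw.
  have ex' := ex w Sw.
  have inv : v0 kap X w \in unitmx.
    rewrite unitmxE unitfE; apply/negP => /det0P [v vn0 vV].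
    set s := \sum_(k < K) v 0 k ^+ 2.
    have s0 : 0 < s.
      rewrite lt0r sumr_ge0 ?andbT => [|k _]; last exact: sqr_ge0.
      apply: contra vn0 => /eqP /psumr_eq0P H.
      apply/eqP/matrixP => i j; rewrite (ord1 i) mxE; apply/eqP.
      by rewrite -sqrf_eq0 H // => ? _; exact: sqr_ge0.
    pose t := (Num.sqrt s)^-1 *: v^T.
    have := ov w Sw t.
    have -> : (t^T *m v0 kap X w *m t) = 0.
      have -> : t^T = (Num.sqrt s)^-1 *: v by apply/matrixP => i j; rewrite !mxE.
      by rewrite -scalemxAl vV scaler0 mul0mx.
    rewrite mxE => H.
    have : c <= 0 by apply: H; rewrite /t; under eq_bigr do rewrite !mxE exprMn;
      rewrite -mulr_sumr exprVn sqr_sqrtr ?ltW // mulVf ?gt_eqF.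
    by rewrite leNgt c0.
  rewrite /b0.
  suff -> : \col_k condCov kap w (X k) (Yobs A B X) =
            v0 kap X w *m \col_l condE kap w (B l) by rewrite mulKmx.
  apply/matrixP => k j; rewrite !mxE.
  under eq_bigr do rewrite !mxE.
  rewrite /condCov /condE.
  have e1 : \int[kap w]_t (X k t * Yobs A B X t) =
     \int[kap w]_t (A t * X k t) +
     \sum_(l < K) \int[kap w]_t (B l t * (X k t * X l t)).
    rewrite -Rint_sum.
    2: by move=> m; exact: (iBXX m k m).
    rewrite -[RHS](RintegralD (f1 := fun t => A t * X k t)
      (f2 := fun t => \sum_(l < K) B l t * (X k t * X l t))) //; last first.
      have -> : (EFin \o (fun x => \sum_(l < K) B l x * (X k x * X l x))) =
        (fun x => \sum_(l < K) (B l x * (X k x * X l x))%:E)%E.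
        by apply/funext => x /=; rewrite sumEFin.
      exact: (integrable_sum measurableT _ (fun l _ => iBXX l k l)).
    exact: iAX k.
    apply: eq_Rintegral => t _; rewrite /Yobs mulrDr mulr_sumr mulrC.
    congr (_ + _); apply: eq_bigr => l _; ring.
  have e2 : \int[kap w]_t (Yobs A B X t) =
     \int[kap w]_t (A t) + \sum_(l < K) \int[kap w]_t (B l t * X l t).
    rewrite -Rint_sum.
    2: by move=> m; exact: (iBX m m).
    rewrite -[RHS](RintegralD (f1 := fun t => A t)
      (f2 := fun t => \sum_(l < K) B l t * X l t)) //; last first.
      have -> : (EFin \o (fun x => \sum_(l < K) B l x * X l x)) =
        (fun x => \sum_(l < K) (B l x * X l x)%:E)%E.
        by apply/funext => x /=; rewrite sumEFin.
      exact: (integrable_sum measurableT _ (fun l _ => iBX l l)).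
    apply: eq_Rintegral => t _; rewrite /Yobs; congr (_ + _).
    by apply: eq_bigr => l _; rewrite mulrC.
  rewrite e1 e2.
  have [eA _] := ex' k k k.
  move: eA; rewrite /condCov /condE => /eqP; rewrite subr_eq0 => /eqP ->.
  rewrite [X in _ + X - _](eq_bigr (fun l =>
    \int[kap w]_t B l t * \int[kap w]_t (X k t * X l t))); last first.
    move=> l _; have [_ [_ eB]] := ex' k l l.
    by move: eB; rewrite /condCov /condE => /eqP; rewrite subr_eq0 => /eqP.
  rewrite [X in _ * (_ + X)](eq_bigr (fun l =>
    \int[kap w]_t B l t * \int[kap w]_t X l t)); last first.
    move=> l _; have [_ [eB _]] := ex' l l l.
    by move: eB; rewrite /condCov /condE => /eqP; rewrite subr_eq0 => /eqP.
  rewrite /=.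
  rewrite mulrDr mulr_sumr.
  transitivity (\sum_(l < K) \int[kap w]_x B l x * \int[kap w]_x (X k x * X l x) -
    \sum_(l < K) \int[kap w]_x X k x * (\int[kap w]_x B l x * \int[kap w]_x X l x)).
    ring.
  rewrite -sumrB; apply: eq_bigr => l _; ring.
apply/matrixP => k j; rewrite !mxE /jointE /Rintegral; congr fine.
apply: (int_ae _ _ _ _ mS SC0) => w Sw /=.
by rewrite key // mxE.
Qed.
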